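(* Let $\{\mu_n^{(m)}:1\le n\le m\}$ be a family of smooth functions, $\mu_n^{(m)}$ a function of $(\nu_n,\dots,\nu_m)$, with $\mu_n^{(m)}(0,\dots,0)=0$, satisfying for all $1\le n\le m$ $$\mu_n^{(m)}(\nu_n,\dots,\nu_m)=\begin{cases}\dfrac{\nu_m^{m+1}}{m+1},& n=m,\\[2mm] \displaystyle\sum_{k=0}^n\binom nk\nu_m^{\,n-k}\,\mu_k^{(m-n-1)}(\nu_{k+n},\dots,\nu_{m-1}),& n<m,\end{cases}$$ (equivalently, $\partial\mu_n^{(m)}/\partial\nu_k=n\,\mu_{n-1}^{(k-1)}(\nu_{m-k+n},\dots,\nu_m)$ for $k=n,\dots,m$), with the conventions $\mu_0^{(l)}(x_0,\dots,x_l)=x_0$ and $\mu_k^{(l)}\equiv0$ if $k>l$ or $l<0$. Then for every level $m\ge1$ and all $k,l\in\{1,\dots,m\}$, $$\sum_{j=1}^m\frac{\partial\mu_k^{(m)}}{\partial\nu_j}\frac{\partial\mu_l^{(m)}}{\partial\nu_{m+1-j}}=(k+l)\mu_{k+l-1}^{(m)},\qquad \sum_{j=1}^m\partial_x\Big(\frac{\partial\mu_k^{(m)}}{\partial\nu_j}\Big)\frac{\partial\mu_l^{(m)}}{\partial\nu_{m+1-j}}=k\,\partial_x\mu_{k+l-1}^{(m)},$$ where $\mu_j^{(m)}:=0$ for $j\ge m+1$ and the second identity holds for any smooth dependence of $\nu_1,\dots,\nu_m$ on $x$. In other words, $\mu_k=\mu_k^{(m)}(\boldsymbol\nu)$ flattens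 the bracket with $\alpha_{kl}=(k+l)\mu_{k+l-1}$, $\beta_{kl}=k\partial_x\mu_{k+l-1}$ to the constant antidiagonal metric $g_{ij}=\delta_{i+j,m+1}$. *)

(* Defs.v *)
From HB Require Import structures.
From mathcomp Require Import all_boot all_order all_algebra.
From mathcomp Require Import all_classical all_reals all_analysis.
Set Implicit Arguments. Unset Strict Implicit. Unset Printing Implicit Defensive.
Import Order.TTheory GRing.Theory Num.Theory.
Local Open Scope ring_scope.

(* Points nu = (nu_0, nu_1, nu_2, ...) : nat -> R.  A function of
   (nu_n,...,nu_m) is encoded as a function of the whole sequence that
   only reads the coordinates it depends on. *)

Definition partial (R : realType) (f : (nat -> R) -> R) (j : nat) (nu : nat -> R) : R :=
  derive1 (fun t : R => f (fun i => if i == j then t else nu i)) (nu j).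

Definition smooth (R : realType) (f : R -> R) : Prop :=
  forall (n : nat) (x : R), derivable (derive1n n f) x 1.

(* The recursive system defining the family mu.
   [mu n m nu] stands for mu_n^{(m)}(nu_n, ..., nu_m). *)
Definition mu_family (R : realType) (mu : nat -> nat -> (nat -> R) -> R) : Prop :=
  [/\
      (forall (l : nat) (nu : nat -> R), mu 0%N l nu = nu 0%N),
      (forall (k l : nat) (nu : nat -> R), (l < k)%N -> mu k l nu = 0),
      (forall (m : nat) (nu : nat -> R), (1 <= m)%N ->
          mu m m nu = nu m ^+ m.+1 / m.+1%:R)
    &
      (forall (n m : nat) (nu : nat -> R), (1 <= n)%N -> (n < m)%N ->
          mu n m nu = \sum_(k < n.+1)
             'C(n, k)%:R * nu m ^+ (n - k) * mu k (m - n - 1)%N (fun i => nu (i + n)%N))].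

(* Main.v *)
Require Import Defs.
From HB Require Import structures.
From mathcomp Require Import all_boot all_order all_algebra.
From mathcomp Require Import all_classical all_reals all_analysis.
From mathcomp Require Import ring lra zify.
Set Implicit Arguments. Unset Strict Implicit. Unset Printing Implicit Defensive.
Import Order.TTheory GRing.Theory Num.Theory.
Local Open Scope ring_scope.

Definition DD (R : realType) (nu : nat -> R) (m : nat) : {poly R} :=
  \poly_(i < m.+1) nu (m - i)%N.
Definition Dt (R : realType) (nu : nat -> R) (m : nat) : {poly R} :=
  \poly_(i < m) nu (m - i)%N.
Definition CC (R : realType) (n m : nat) (nu : nat -> R) : R :=
  if (m < n)%N then 0 else (DD nu m ^+ n.+1)`_(m - n) / n.+1%:R.

Lemma trunc_exp (R : realType) (p q : {poly R}) (i : nat) :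
  (forall j, (j <= i)%N -> p`_j = q`_j) ->
  forall e, (p ^+ e)`_i = (q ^+ e)`_i.
Proof.
move=> H e; elim: e i H => [|e IH] i H; first by rewrite !expr0.
rewrite !exprS !coefM; apply: eq_bigr => j _.
rewrite H; last by rewrite -ltnS.
rewrite IH // => j' hj'; apply: H; apply: leq_trans hj' (leq_subr _ _).
Qed.

Lemma DD_rec (R : realType) (nu : nat -> R) (m : nat) : (1 <= m)%N ->
  DD nu m = (nu m)%:P + 'X * DD nu m.-1.
Proof.
move=> hm; apply/polyP => i; rewrite coefD coefC coefXM !coef_poly.
case: i => [|i] /=; first by rewrite subn0 addr0.
by rewrite add0r; case: m hm => // m _ /=.
Qed.

Lemma CC_rec (R : realType) (nu : nat -> R) (n m : nat) : (n < m)%N ->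
  CC n m nu = \sum_(k < n.+1)
      'C(n, k)%:R * nu m ^+ (n - k) * CC k (m - n - 1)%N (fun i => nu (i + n)%N).
Proof.
move=> hnm.
have hm : (1 <= m)%N by lia.
rewrite /CC ltnNge (ltnW hnm) /= DD_rec // exprDn coef_sum.
rewrite big_ord_recl /= subn0 -polyC_exp.
rewrite expr0 mulr1 mulr1n coefC.
have -> : (m - n == 0)%N = false by apply/eqP; lia.
rewrite add0r mulr_suml; apply: eq_bigr => i _.
rewrite /bump /= add1n coefMn exprMn -!polyC_exp -mulrA coefCM coefXnM.
have -> : (m - n < i.+1)%N = (m - n - 1 < i)%N by lia.
case: ifP => hi; first by rewrite mulr0 mul0rn mul0r mulr0.
have -> : (m - n - i.+1 = m - n - 1 - i)%N by lia.
rewrite (@trunc_exp _ (DD (fun i0 : nat => nu (i0 + n)%N) (m - n - 1)) (DD nu m.-1)); last first.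
  move=> j hj; rewrite !coef_poly.
  have -> : (j < (m - n - 1).+1)%N by lia.
  have -> : (j < m.-1.+1)%N by lia.
  congr nu; lia.
rewrite subSS.
have hb : ('C(n.+1, i.+1) * i.+1 = n.+1 * 'C(n, i))%N by rewrite mul_bin_diag mulnC.
have hb' : ('C(n.+1, i.+1)%:R : R) = n.+1%:R * 'C(n, i)%:R / i.+1%:R.
  by rewrite -natrM -hb natrM mulfK // pnatr_eq0.
rewrite -[_ *+ 'C(n.+1, i.+1)]mulr_natr hb'.

field.
by rewrite !(addrC 1) !natr1 !pnatr_eq0.
Qed.

Lemma mu_CC (R : realType) (mu : nat -> nat -> (nat -> R) -> R) :
  mu_family mu -> forall m n nu, mu n m nu = CC n m nu.
Proof.
case=> H0 H1 H2 H3.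
elim/ltn_ind => m IH n nu.
case: n => [|n].
  rewrite H0 /CC ltn0 expr1 divr1 coef_poly subn0 ltnSn subnn //.
case: (ltngtP m n.+1) => hmn.
- by rewrite H1 // /CC hmn.
- rewrite H3 // CC_rec //; apply: eq_bigr => k _; rewrite IH //; lia.
- subst m; rewrite H2 // /CC ltnn subnn -horner_coef0 horner_exp horner_coef0.
  by rewrite coef_poly /= subn0.
Qed.

Definition cwd (R : realType) (g g' : R -> {poly R}) :=
  forall i t, is_derive t (1 : R) (fun s => (g s)`_i) ((g' t)`_i).

Lemma cwd_ext (R : realType) (g g1 g2 : R -> {poly R}) :
  cwd g g1 -> (forall t, g1 t = g2 t) -> cwd g g2.
Proof. by move=> H e i t; rewrite -e. Qed.

Lemma cwd_const (R : realType) (P : {poly R}) : cwd (fun _ => P) (fun _ => 0).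
Proof. by move=> i t; rewrite coef0; exact: is_derive_cst. Qed.

Lemma cwd_add (R : realType) (g g' h h' : R -> {poly R}) :
  cwd g g' -> cwd h h' -> cwd (fun s => g s + h s) (fun s => g' s + h' s).
Proof.
move=> Hg Hh i t.
have -> : (fun s => (g s + h s)`_i) = (fun s => (g s)`_i) + (fun s => (h s)`_i).
  by apply/funext => s; rewrite coefD.
rewrite coefD; exact: is_deriveD.
Qed.

Lemma cwd_scale (R : realType) (c : R) (g g' : R -> {poly R}) :
  cwd g g' -> cwd (fun s => c *: g s) (fun s => c *: g' s).
Proof.
move=> Hg i t.
have -> : (fun s => (c *: g s)`_i) = c \*: (fun s => (g s)`_i).
  by apply/funext => s; rewrite coefZ.
rewrite coefZ; exact: is_deriveZ.
Qed.

Lemma cwd_mul (R : realType) (g g' h h' : R -> {poly R}) :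
  cwd g g' -> cwd h h' -> cwd (fun s => g s * h s) (fun s => g' s * h s + g s * h' s).
Proof.
move=> Hg Hh i t.
have -> : (fun s => (g s * h s)`_i) =
   \sum_(j < i.+1) ((fun s => (g s)`_j) * (fun s => (h s)`_(i - j))).
  by rewrite fct_sumE; apply/funext => s; rewrite coefM.
rewrite coefD !coefM -big_split /=.
apply: is_derive_eq.
  apply: is_derive_sum => j; exact: is_deriveM.
apply: eq_bigr => j _ /=; rewrite /GRing.scale /=; ring.
Qed.

Lemma cwd_exp (R : realType) (g g' : R -> {poly R}) (e : nat) :
  cwd g g' -> cwd (fun s => g s ^+ e) (fun s => e%:R *: (g s ^+ e.-1 * g' s)).
Proof.
move=> Hg; elim: e => [|e IH].
  apply: cwd_ext; first exact: (cwd_const 1).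
  by move=> t; rewrite scale0r.
have := cwd_mul IH Hg.
have -> : (fun s => g s ^+ e * g s) = (fun s => g s ^+ e.+1).
  by apply/funext => s; rewrite exprSr.
move/cwd_ext; apply => t.
case: e {IH} => [|e] /=.
  by rewrite scale0r mul0r add0r expr0 scale1r.
rewrite -!mul_polyC -[e.+2]addn1 natrD polyCD polyC1 exprS; ring.
Qed.

Lemma cwd_lin (R : realType) (a : R) (P : {poly R}) :
  cwd (fun s => (s - a) *: P) (fun _ => P).
Proof.
move=> i t.
have -> : (fun s => ((s - a) *: P)`_i) = (P`_i) \*: (fun s => s - a).
  by apply/funext => s; rewrite coefZ /= mulrC.
apply: is_derive_eq.
by rewrite /GRing.scale /= subr0 mulr1.
Qed.

Lemma derive1_cwd (R : realType) (g g' : R -> {poly R}) i t :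
  cwd g g' -> derive1 (fun s => (g s)`_i) t = (g' t)`_i.
Proof. by move=> H; rewrite derive1E (@derive_val _ _ _ _ _ _ _ (H i t)). Qed.

Lemma DD_Dt (R : realType) (nu : nat -> R) m e i : (i < m)%N ->
  (DD nu m ^+ e)`_i = (Dt nu m ^+ e)`_i.
Proof.
move=> hi; apply: trunc_exp => j hj; rewrite !coef_poly.
have -> : (j < m)%N by lia.
by have -> : (j < m.+1)%N by lia.
Qed.

Lemma partial_mu (R : realType) (mu : nat -> nat -> (nat -> R) -> R)
  (Hmu : mu_family mu) m k j nu :
  (1 <= k <= m)%N -> (1 <= j <= m)%N ->
  partial (mu k m) j nu = ('X^k * Dt nu m ^+ k)`_j.
Proof.
move=> hk hj; rewrite /partial.
set G := fun t : R => DD nu m + (t - nu j) *: 'X^(m - j).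
have -> : (fun t => mu k m (fun i => if i == j then t else nu i)) =
   (fun t => (((k.+1%:R)^-1 : R) *: G t ^+ k.+1)`_(m - k)).
  apply/funext => t; rewrite mu_CC // /CC.
  have -> : (m < k)%N = false by lia.
  rewrite coefZ mulrC; congr (_ * _).
  suff -> : DD (fun i : nat => if i == j then t else nu i) m = G t by [].
  apply/polyP => i; rewrite /G coefD coefZ coefXn !coef_poly.
  case: ifP => hi.
    case: (eqVneq i (m - j)%N) => hij.
      have e : (m - i = j)%N by lia.
      by rewrite e eqxx mulr1 addrC subrK.
    have -> : (m - i == j)%N = false by lia.
    by rewrite mulr0 addr0.
  have -> : (i == m - j)%N = false by lia.
  by rewrite mulr0 addr0.
have HG : cwd G (fun _ => 0 + 'X^(m - j)).
  exact: cwd_add (cwd_const _) (cwd_lin _ _).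
rewrite (derive1_cwd _ _ (cwd_scale _ (cwd_exp k.+1 HG))) /=.
rewrite /G subrr scale0r addr0 add0r scalerA mulVf ?pnatr_eq0 // scale1r.
rewrite coefMXn coefXnM.
have -> : (m - k < m - j)%N = (j < k)%N by lia.
case: ifP => // hjk.
have -> : (m - k - (m - j) = j - k)%N by lia.
apply: DD_Dt; lia.
Qed.

Lemma mu_Dt (R : realType) (mu : nat -> nat -> (nat -> R) -> R)
  (Hmu : mu_family mu) m n nu : (1 <= n <= m)%N ->
  mu n m nu = (Dt nu m ^+ n.+1)`_(m - n) / n.+1%:R.
Proof.
move=> hn; rewrite mu_CC // /CC.
have -> : (m < n)%N = false by lia.
rewrite DD_Dt //; lia.
Qed.

Lemma sum_coef (R : realType) (P Q : {poly R}) m :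
  P`_0 = 0 -> Q`_0 = 0 ->
  \sum_(1 <= j < m.+1) P`_j * Q`_(m.+1 - j) = (P * Q)`_m.+1.
Proof.
move=> hP hQ; rewrite coefM -(big_mkord xpredT (fun j => P`_j * Q`_(m.+1 - j))).
rewrite [RHS]big_nat_recr //= subnn hQ mulr0 addr0.
by rewrite [RHS]big_ltn // hP mul0r add0r.
Qed.

Theorem proposition4 (R : realType) (mu : nat -> nat -> (nat -> R) -> R)
  (Hmu : mu_family mu) (m : nat) (Hm : (1 <= m)%N) (k l : nat)
  (Hk : (1 <= k <= m)%N) (Hl : (1 <= l <= m)%N) :
  (forall nu : nat -> R,
     \sum_(1 <= j < m.+1)
        partial (mu k m) j nu * partial (mu l m) (m.+1 - j)%N nu
     = (k + l)%:R * mu (k + l - 1)%N m nu)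
  /\
  (forall nu : R -> nat -> R,
     (forall i : nat, (1 <= i <= m)%N -> smooth (fun x => nu x i)) ->
     forall x : R,
       \sum_(1 <= j < m.+1)
          derive1 (fun y => partial (mu k m) j (nu y)) x
          * partial (mu l m) (m.+1 - j)%N (nu x)
       = k%:R * derive1 (fun y => mu (k + l - 1)%N m (nu y)) x).
Proof.
have Hmu' := Hmu; case: Hmu' => H0 H1 H2 H3.
split.
  move=> nu.
  transitivity (\sum_(1 <= j < m.+1)
     ('X^k * Dt nu m ^+ k)`_j * ('X^l * Dt nu m ^+ l)`_(m.+1 - j)).
    apply: eq_big_nat => j hj; rewrite !partial_mu //; lia.
  rewrite sum_coef; last 2 first.
  - by rewrite coefXnM; have -> : (0 < k)%N by lia.
  - by rewrite coefXnM; have -> : (0 < l)%N by lia.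
  rewrite mulrACA -!exprD coefXnM.
  case: (ltnP m (k + l - 1)) => hkl.
    rewrite H1 // mulr0; have -> : (m.+1 < k + l)%N by lia.
    by [].
  rewrite mu_Dt //; last by lia.
  have -> : (m.+1 < k + l)%N = false by lia.
  have -> : (k + l - 1).+1 = (k + l)%N by lia.
  have -> : (m - (k + l - 1) = m.+1 - (k + l))%N by lia.
  rewrite mulrC divfK // pnatr_eq0; lia.
move=> nu Hs x.
set g := fun y => Dt (nu y) m.
set g' := fun y => \poly_(i < m) derive1 (fun z => nu z (m - i)%N) y.
have Hg : cwd g g'.
  move=> i t; rewrite /g /g' coef_poly.
  case: (ltnP i m) => hi.
    have -> : (fun s => (Dt (nu s) m)`_i) = (fun s => nu s (m - i)%N).
      by apply/funext => s; rewrite coef_poly hi.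
    have hd : derivable (fun s => nu s (m - i)%N) t 1.
      by have := Hs (m - i)%N ltac:(lia) 0%N t.
    by rewrite derive1E; apply: derivableP.
  have -> : (fun s => (Dt (nu s) m)`_i) = cst 0.
    by apply/funext => s; rewrite coef_poly ltnNge hi.
  exact: is_derive_cst.
transitivity (\sum_(1 <= j < m.+1)
   ('X^k * (k%:R *: (g x ^+ k.-1 * g' x)))`_j * ('X^l * g x ^+ l)`_(m.+1 - j)).
  apply: eq_big_nat => j hj.
  rewrite (@partial_mu _ _ Hmu m l); [|lia|lia].
  have -> : (fun y => partial (mu k m) j (nu y)) = (fun y => ('X^k * g y ^+ k)`_j).
    by apply/funext => y; rewrite partial_mu //; lia.
  rewrite (derive1_cwd _ _ (cwd_mul (cwd_const 'X^k) (cwd_exp k Hg))).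
  by rewrite mul0r add0r.
rewrite sum_coef; last 2 first.
- by rewrite coefXnM; have -> : (0 < k)%N by lia.
- by rewrite coefXnM; have -> : (0 < l)%N by lia.
have -> : 'X^k * (k%:R *: (g x ^+ k.-1 * g' x)) * ('X^l * g x ^+ l) =
   k%:R *: ('X^(k + l) * (g x ^+ (k + l - 1) * g' x)).
  have -> : (k + l - 1 = k.-1 + l)%N by lia.
  rewrite !exprD -!mul_polyC; ring.
rewrite coefZ coefXnM; congr (_ * _).
case: (ltnP m (k + l - 1)) => hkl.
  have -> : (fun y => mu (k + l - 1)%N m (nu y)) = cst 0.
    by apply/funext => y; rewrite H1.
  rewrite derive1E derive_cst.
  by have -> : (m.+1 < k + l)%N by lia.
have -> : (fun y => mu (k + l - 1)%N m (nu y)) =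
   (fun y => (((k + l)%:R^-1 : R) *: g y ^+ (k + l))`_(m.+1 - (k + l))).
  apply/funext => y; rewrite mu_Dt //; last by lia.
  have -> : (k + l - 1).+1 = (k + l)%N by lia.
  have -> : (m - (k + l - 1) = m.+1 - (k + l))%N by lia.
  by rewrite coefZ mulrC.
rewrite (derive1_cwd _ _ (cwd_scale _ (cwd_exp (k + l) Hg))).
have -> : (m.+1 < k + l)%N = false by lia.
rewrite scalerA mulVf ?pnatr_eq0; last by lia.
by rewrite scale1r subn1.
Qed.
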